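(* Let $\alpha_1,\dots,\alpha_4$ be constants, $H=H(t,t^-,q,q^-,p,p^-)$ smooth, and $X=\xi(t)\partial_t+\eta(t,q,p)\partial_q+\nu(t,q,p)\partial_p$ with $\xi(t)=\alpha t+f(t)$, where $\alpha$ is a constant and $f$ is $\tau$-periodic. Then, with $\dot\xi=D(\xi)$, $$\frac{\delta\Omega}{\delta p}\equiv X\Big(\frac{\delta\tilde H}{\delta p}\Big)+\frac{\partial\eta}{\partial p}\frac{\delta\tilde H}{\delta q}+\Big(\frac{\partial\nu}{\partial p}+\dot\xi\Big)\frac{\delta\tilde H}{\delta p},$$ $$\frac{\delta\Omega}{\delta q}\equiv X\Big(\frac{\delta\tilde H}{\delta q}\Big)+\Big(\frac{\partial\eta}{\partial q}+\dot\xi\Big)\frac{\delta\tilde H}{\delta q}+\frac{\partial\nu}{\partial q}\frac{\delta\tilde H}{\delta p},$$ $$\frac{\delta\Omega}{\delta t}\equiv X\Big(\frac{\delta\tilde H}{\delta t}\Big)+2\dot\xi\frac{\delta\tilde H}{\delta t}+\frac{\partial\eta}{\partial t}\frac{\delta\tilde H}{\delta q}+\frac{\partial\nu}{\partial t}\frac{\delta\tilde H}{\delta p}.$$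
   Context: Constant delay $\tau>0$; $t^\pm=t\pm\tau$, $f^\pm=f(t\pm\tau)$; scalar $q,p$. $S_\pm$: forward/backward shift operators on expressions ($S_+$ sends $t^-,t,q^-,q,p^-,p,\dot q^-,\dots$ to $t,t^+,q,q^+,p,p^+,\dot q,\dots$); $\xi^\pm=S_\pm(\xi)$ etc.; $H^+=S_+(H)$. $D=\partial_t+\dot q\partial_q+\dot p\partial_p+\ddot q\partial_{\dot q}+\ddot p\partial_{\dot p}+\cdots$ plus analogous terms for variables at $t^-$ and $t^+$. $\tilde H=p^{-}(\alpha_{1}\dot{q}+\alpha_{2}\dot{q}^{-})+p(\alpha_{3}\dot{q}+\alpha_{4}\dot{q}^{-})-H$. For a function $F$ of $(t,t^-,q,q^-,p,p^-,\dot q,\dot q^-,\dot p,\dot p^-)$ the variational operators are $\frac{\delta F}{\delta p}=\frac{\partial F}{\partial p}-D\frac{\partial F}{\partial\dot p}+S_+\Big(\frac{\partial F}{\partial p^-}-D\frac{\partial F}{\partial\dot p^-}\Big)$, $\frac{\delta F}{\delta q}=\frac{\partial F}{\partial q}-D\frac{\partial F}{\partial\dot q}+S_+\Big(\frac{\partial F}{\partial q^-}-D\frac{\partial F}{\partial\dot q^-}\Big)$, $\frac{\delta F}{\delta t}=\frac{\partial F}{\partial t}+D\Big(\dot q\frac{\partial F}{\partial\dot q}+\dot p\frac{\partial F}{\partial\dot p}\Big)+S_+\Big(\frac{\partial F}{\partial t^-}+D\Big(\dot q^-\frac{\partial F}{\partial\dot q^-}+\dot p^-\frac{\partial F}{\partial\dot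 p^-}\Big)\Big)-D(F)$. In particular $\frac{\delta\tilde H}{\delta p}=\alpha_1\dot q^++(\alpha_2+\alpha_3)\dot q+\alpha_4\dot q^--\partial_p(H+H^+)$, $\frac{\delta\tilde H}{\delta q}=-(\alpha_4\dot p^++(\alpha_2+\alpha_3)\dot p+\alpha_1\dot p^-+\partial_q(H+H^+))$, $\frac{\delta\tilde H}{\delta t}=D[\alpha_2(p\dot q-p^-\dot q^-)+\alpha_4(p^+\dot q-p\dot q^-)]+D(H)-\partial_t(H+H^+)$. $\Omega=X(\tilde H)+\tilde HD(\xi)=\nu^{-}(\alpha_{1}\dot{q}+\alpha_{2}\dot{q}^{-})+p^{-}(\alpha_{1}D(\eta)+\alpha_{2}D(\eta^{-}))+\nu(\alpha_{3}\dot{q}+\alpha_{4}\dot{q}^{-})+p(\alpha_{3}D(\eta)+\alpha_{4}D(\eta^{-}))+(\alpha_{2}p^{-}+\alpha_{4}p)\dot{q}^{-}D(\xi-\xi^{-})-\xi H_t-\eta H_q-\nu H_p-\xi^{-}H_{t^-}-\eta^{-}H_{q^-}-\nu^{-}H_{p^-}-HD(\xi)$. $X$ is prolonged to all variables at $t^-,t,t^+$ and their derivatives by the standard prolongation formulas: coefficient of $\partial_{\dot q}$ is $D(\eta)-\dot qD(\xi)$, of $\partial_{\dot p}$ is $D(\nu)-\dot pD(\xi)$, of $\partial_{\ddot q}$ is $D(D(\eta)-\dot qD(\xi))-\ddot qD(\xi)$, etc., and the shifted variables carry the shifted coefficients $S_\pm(\cdot)$. Variables are considered with the delay equation $t^+-t=t-t^-=\tau$.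 *)

(* Defs.v *)
From Stdlib Require Import Reals ZArith List.
From Coquelicot Require Import Coquelicot.
Open Scope R_scope.

(** * Jet space with delay levels
    Coordinates: [CT k] = t^(k) (the time variable at level k, i.e. t+kτ,
    treated as an independent coordinate), [CQ k n] = n-th derivative of q
    at level k, [CP k n] = n-th derivative of p at level k.
    Level -1 = "t^-", 0 = "t", 1 = "t^+". *)
Inductive coord := CT (k : Z) | CQ (k : Z) (n : nat) | CP (k : Z) (n : nat).

Definition coord_eq_dec : forall a b : coord, {a = b} + {a <> b}.
Proof. decide equality; auto using Z.eq_dec, Nat.eq_dec. Defined.

Definition Jet := coord -> R.
Definition JFun := Jet -> R.

Definition upd (x : Jet) (c : coord) (s : R) : Jet :=
  fun c' => if coord_eq_dec c' c then s else x c'.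

Definition pd (c : coord) (F : JFun) : JFun :=
  fun x => Derive (fun s => F (upd x c s)) (x c).

Definition dirder (v : Jet -> Jet) (F : JFun) : JFun :=
  fun x => Derive (fun s => F (fun c => x c + s * v x c)) 0.

Definition Dvf : Jet -> Jet := fun x c =>
  match c with
  | CT _ => 1
  | CQ k n => x (CQ k (S n))
  | CP k n => x (CP k (S n))
  end.
Definition Dt (F : JFun) : JFun := dirder Dvf F.

Definition shift (m : Z) (x : Jet) : Jet := fun c =>
  match c with
  | CT k => x (CT (k + m)%Z)
  | CQ k n => x (CQ (k + m)%Z n)
  | CP k n => x (CP (k + m)%Z n)
  end.
Definition Sp (F : JFun) : JFun := fun x => F (shift 1 x).

(** * Variational operators (for F depending on t,t^-,q,q^-,p,p^- and first derivatives) *)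
Definition var_p (F : JFun) : JFun := fun x =>
  pd (CP 0 0) F x - Dt (pd (CP 0 1) F) x
  + Sp (fun y => pd (CP (-1) 0) F y - Dt (pd (CP (-1) 1) F) y) x.

Definition var_q (F : JFun) : JFun := fun x =>
  pd (CQ 0 0) F x - Dt (pd (CQ 0 1) F) x
  + Sp (fun y => pd (CQ (-1) 0) F y - Dt (pd (CQ (-1) 1) F) y) x.

Definition var_t (F : JFun) : JFun := fun x =>
  pd (CT 0) F x
  + Dt (fun y => y (CQ 0 1) * pd (CQ 0 1) F y + y (CP 0 1) * pd (CP 0 1) F y) x
  + Sp (fun y => pd (CT (-1)) F y
          + Dt (fun z => z (CQ (-1) 1) * pd (CQ (-1) 1) F z
                         + z (CP (-1) 1) * pd (CP (-1) 1) F z) y) x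
  - Dt F x.

Definition Hj (H : R -> R -> R -> R -> R -> R -> R) : JFun := fun x =>
  H (x (CT 0)) (x (CT (-1))) (x (CQ 0 0)) (x (CQ (-1) 0)) (x (CP 0 0)) (x (CP (-1) 0)).

Definition Htilde (a1 a2 a3 a4 : R) (H : R -> R -> R -> R -> R -> R -> R) : JFun :=
  fun x => x (CP (-1) 0) * (a1 * x (CQ 0 1) + a2 * x (CQ (-1) 1))
         + x (CP 0 0) * (a3 * x (CQ 0 1) + a4 * x (CQ (-1) 1)) - Hj H x.

Definition xi_at (xi : R -> R) (k : Z) : JFun := fun x => xi (x (CT k)).
Definition g_at (g : R -> R -> R -> R) (k : Z) : JFun :=
  fun x => g (x (CT k)) (x (CQ k 0)) (x (CP k 0)).

Fixpoint prol (xi : R -> R) (g : R -> R -> R -> R) (isq : bool) (k : Z) (n : nat) : JFun :=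
  match n with
  | O => g_at g k
  | S m => fun x => Dt (prol xi g isq k m) x
                    - x (if isq then CQ k (S m) else CP k (S m)) * Dt (xi_at xi k) x
  end.

Definition Xvf (xi : R -> R) (eta nu : R -> R -> R -> R) : Jet -> Jet := fun x c =>
  match c with
  | CT k => xi_at xi k x
  | CQ k n => prol xi eta true k n x
  | CP k n => prol xi nu false k n x
  end.

Definition Xop (xi : R -> R) (eta nu : R -> R -> R -> R) (F : JFun) : JFun :=
  dirder (Xvf xi eta nu) F.

Definition Omega (xi : R -> R) (eta nu : R -> R -> R -> R) (Ht : JFun) : JFun :=
  fun x => Xop xi eta nu Ht x + Ht x * Dt (xi_at xi 0) x.

Definition delay (tau : R) (x : Jet) : Prop :=
  forall k : Z, x (CT k) = x (CT 0) + IZR k * tau.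

Definition depends_only (S : list coord) (F : JFun) : Prop :=
  forall x y : Jet, (forall c, In c S -> x c = y c) -> F x = F y.

Definition iter_pd (cs : list coord) (F : JFun) : JFun :=
  fold_right (fun c G => pd c G) F cs.

Definition cont_on (S : list coord) (G : JFun) : Prop :=
  forall (x : Jet) (eps : R), 0 < eps -> exists delta, 0 < delta /\
    forall y : Jet, (forall c, In c S -> Rabs (y c - x c) < delta) ->
      Rabs (G y - G x) < eps.

Definition smooth_jet (S : list coord) (F : JFun) : Prop :=
  depends_only S F /\
  forall cs : list coord, (forall c, In c cs -> In c S) ->
    cont_on S (iter_pd cs F) /\
    forall (x : Jet) (c : coord), In c S ->
      ex_derive (fun s => iter_pd cs F (upd x c s)) (x c).

Definition smooth6 (H : R -> R -> R -> R -> R -> R -> R) : Prop :=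
  smooth_jet (CT 0 :: CT (-1) :: CQ 0 0 :: CQ (-1) 0 :: CP 0 0 :: CP (-1) 0 :: nil) (Hj H).

Definition smooth3 (g : R -> R -> R -> R) : Prop :=
  smooth_jet (CT 0 :: CQ 0 0 :: CP 0 0 :: nil) (g_at g 0).

Definition smooth1 (f : R -> R) : Prop :=
  forall (n : nat) (t : R), ex_derive (Derive_n f n) t.

(* Main.v *)
Require Import Defs.
From Stdlib Require Import Reals ZArith List.
From Coquelicot Require Import Coquelicot.
Open Scope R_scope.
From Stdlib Require Import Lra FunctionalExtensionality.
Import ListNotations.

Inductive atom := AX (c : coord) | AH (l : list nat) (k : Z) | AE (l : list nat) (k : Z)
 | AN (l : list nat) (k : Z) | AF (n : nat) (k : Z) | AP (i : nat).
Inductive ex := ECst (z : Z) | EAdd (a b : ex) | EMul (a b : ex) | EAt (a : atom).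

Definition S6 := [CT 0; CT (-1); CQ 0 0; CQ (-1) 0; CP 0 0; CP (-1) 0].
Definition S3 := [CT 0; CQ 0 0; CP 0 0].
Definition shiftc (m : Z) (c : coord) : coord :=
  match c with CT k => CT (k+m) | CQ k n => CQ (k+m) n | CP k n => CP (k+m) n end.
Fixpoint sumE (l : list ex) : ex := match l with nil => ECst 0 | e :: l' => EAdd e (sumE l') end.
Definition seq6 := [0;1;2;3;4;5]%nat.
Definition seq3 := [0;1;2]%nat.
Definition idx (S : list coord) (i : nat) := nth i S (CT 0).

Fixpoint der (w : coord -> ex) (e : ex) : ex :=
 match e with
 | ECst _ => ECst 0
 | EAdd a b => EAdd (der w a) (der w b)
 | EMul a b => EAdd (EMul (der w a) b) (EMul a (der w b))
 | EAt a => match a with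
   | AX c => w c
   | AH l k => sumE (map (fun i => EMul (w (shiftc k (idx S6 i))) (EAt (AH (i :: l) k))) seq6)
   | AE l k => sumE (map (fun i => EMul (w (shiftc k (idx S3 i))) (EAt (AE (i :: l) k))) seq3)
   | AN l k => sumE (map (fun i => EMul (w (shiftc k (idx S3 i))) (EAt (AN (i :: l) k))) seq3)
   | AF n k => EMul (w (CT k)) (EAt (AF (S n) k))
   | AP _ => ECst 0
   end
 end.

Definition shiftA m a := match a with AX c => AX (shiftc m c) | AH l k => AH l (k+m)
 | AE l k => AE l (k+m) | AN l k => AN l (k+m) | AF n k => AF n (k+m) | AP i => AP i end.
Fixpoint shiftE m e := match e with ECst z => ECst z | EAdd a b => EAdd (shiftE m a) (shiftE m b)
 | EMul a b => EMul (shiftE m a) (shiftE m b) | EAt a => EAt (shiftA m a) end.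

Definition negE e := EMul (ECst (-1)) e.
Definition deltaE c c' := if coord_eq_dec c' c then ECst 1 else ECst 0.
Definition Dw c := match c with CT _ => ECst 1 | CQ k n => EAt (AX (CQ k (S n))) | CP k n => EAt (AX (CP k (S n))) end.
Definition xiE k := EAdd (EMul (EAt (AP 0)) (EAt (AX (CT k)))) (EAt (AF 0 k)).
Fixpoint prolE (isq : bool) (k : Z) (n : nat) : ex :=
  match n with
  | O => EAt (if isq then AE nil k else AN nil k)
  | S m => EAdd (der Dw (prolE isq k m))
               (negE (EMul (EAt (AX (if isq then CQ k (S m) else CP k (S m)))) (der Dw (xiE k))))
  end.
Definition wX c := match c with CT k => xiE k | CQ k n => prolE true k n | CP k n => prolE false k n end.
Definition pdE c e := der (deltaE c) e.
Definition DtE := der Dw.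
Definition XE := der wX.
Definition var_pE F := EAdd (EAdd (pdE (CP 0 0) F) (negE (DtE (pdE (CP 0 1) F))))
  (shiftE 1 (EAdd (pdE (CP (-1) 0) F) (negE (DtE (pdE (CP (-1) 1) F))))).
Definition var_qE F := EAdd (EAdd (pdE (CQ 0 0) F) (negE (DtE (pdE (CQ 0 1) F))))
  (shiftE 1 (EAdd (pdE (CQ (-1) 0) F) (negE (DtE (pdE (CQ (-1) 1) F))))).
Definition AXE c := EAt (AX c).
Definition var_tE F := EAdd (EAdd (EAdd (pdE (CT 0) F)
   (DtE (EAdd (EMul (AXE (CQ 0 1)) (pdE (CQ 0 1) F)) (EMul (AXE (CP 0 1)) (pdE (CP 0 1) F)))))
   (shiftE 1 (EAdd (pdE (CT (-1)) F)
       (DtE (EAdd (EMul (AXE (CQ (-1) 1)) (pdE (CQ (-1) 1) F)) (EMul (AXE (CP (-1) 1)) (pdE (CP (-1) 1) F)))))))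
   (negE (DtE F)).

Definition eHt := EAdd (EAdd (EMul (AXE (CP (-1) 0)) (EAdd (EMul (EAt (AP 1)) (AXE (CQ 0 1))) (EMul (EAt (AP 2)) (AXE (CQ (-1) 1)))))
                           (EMul (AXE (CP 0 0)) (EAdd (EMul (EAt (AP 3)) (AXE (CQ 0 1))) (EMul (EAt (AP 4)) (AXE (CQ (-1) 1))))))
                      (negE (EAt (AH nil 0))).
Definition exidot := DtE (xiE 0).
Definition eOm := EAdd (XE eHt) (EMul eHt exidot).
Definition eE0 := EAt (AE nil 0).
Definition eN0 := EAt (AN nil 0).
Definition eL1 := var_pE eOm.
Definition eR1 := EAdd (EAdd (XE (var_pE eHt)) (EMul (pdE (CP 0 0) eE0) (var_qE eHt)))
                     (EMul (EAdd (pdE (CP 0 0) eN0) exidot) (var_pE eHt)).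
Definition eL2 := var_qE eOm.
Definition eR2 := EAdd (EAdd (XE (var_qE eHt)) (EMul (EAdd (pdE (CQ 0 0) eE0) exidot) (var_qE eHt)))
                     (EMul (pdE (CQ 0 0) eN0) (var_pE eHt)).
Definition eL3 := var_tE eOm.
Definition eR3 := EAdd (EAdd (EAdd (XE (var_tE eHt)) (EMul (EMul (ECst 2) exidot) (var_tE eHt)))
                     (EMul (pdE (CT 0) eE0) (var_qE eHt))) (EMul (pdE (CT 0) eN0) (var_pE eHt)).

Definition enc_coord c : list Z := match c with CT k => [0; k]%Z | CQ k n => [1; k; Z.of_nat n]%Z | CP k n => [2; k; Z.of_nat n]%Z end.
Definition enc_atom a : list Z := match a with
 | AX c => (0 :: enc_coord c)%Z
 | AH l k => (1 :: k :: Z.of_nat (length l) :: map Z.of_nat l)%Z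
 | AE l k => (2 :: k :: Z.of_nat (length l) :: map Z.of_nat l)%Z
 | AN l k => (3 :: k :: Z.of_nat (length l) :: map Z.of_nat l)%Z
 | AF n k => (4 :: k :: Z.of_nat n :: nil)%Z
 | AP i => (5 :: Z.of_nat i :: nil)%Z end.
Fixpoint lcmp (l1 l2 : list Z) : comparison := match l1, l2 with
 | nil, nil => Eq | nil, _ => Lt | _, nil => Gt
 | a :: l1', b :: l2' => match Z.compare a b with Eq => lcmp l1' l2' | r => r end end.
Definition acmp a b := lcmp (enc_atom a) (enc_atom b).
Fixpoint mcmp (m1 m2 : list atom) : comparison := match m1, m2 with
 | nil, nil => Eq | nil, _ => Lt | _, nil => Gt
 | a :: m1', b :: m2' => match acmp a b with Eq => mcmp m1' m2' | r => r end end.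
Definition atom_eq_dec : forall a b : atom, {a = b} + {a <> b}.
Proof. decide equality; try apply coord_eq_dec; try apply Z.eq_dec; try apply Nat.eq_dec;
  try apply (list_eq_dec Nat.eq_dec). Defined.
Definition mono_eq_dec := list_eq_dec atom_eq_dec.
Fixpoint minsert a m := match m with nil => [a]
 | b :: m' => match acmp a b with Gt => b :: minsert a m' | _ => a :: m end end.
Definition mmul (m1 m2 : list atom) := fold_right minsert m2 m1.
Fixpoint pins (t : Z * list atom) (p : list (Z * list atom)) : list (Z * list atom) :=
 match p with nil => [t]
 | u :: p' => match mcmp (snd t) (snd u) with
    | Lt => t :: p
    | Gt => u :: pins t p'
    | Eq => if mono_eq_dec (snd t) (snd u) then
              (let s := (fst t + fst u)%Z in if Z.eqb s 0 then p' else (s, snd u) :: p')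
            else t :: p end end.
Definition pinsert t p := if Z.eqb (fst t) 0 then p else pins t p.
Definition padd p q := fold_right pinsert q p.
Definition pscale (t : Z * list atom) q := map (fun u => ((fst t * fst u)%Z, mmul (snd t) (snd u))) q.
Definition pmul p q := fold_right (fun t acc => padd (pscale t q) acc) nil p.
Fixpoint nins (a : nat) (m : list nat) := match m with nil => [a] | b :: m' => if Nat.leb a b then a :: m else b :: nins a m' end.
Fixpoint isort (l : list nat) := match l with nil => nil | a :: l' => nins a (isort l') end.
Definition canon (fl : bool) a := match a with
 | AH l k => AH (isort l) k | AE l k => AE (isort l) k | AN l k => AN (isort l) k
 | AF n k => if fl then AF n 0 else AF n k | _ => a end.
Fixpoint norm (fl : bool) e := match e with
 | ECst z => if Z.eqb z 0 then nil else [(z, nil)]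
 | EAt a => [(1%Z, [canon fl a])]
 | EAdd a b => padd (norm fl a) (norm fl b)
 | EMul a b => pmul (norm fl a) (norm fl b) end.

Lemma upd_eq x c s : upd x c s c = s.
Proof. unfold upd; destruct (coord_eq_dec c c); congruence. Qed.
Lemma upd_neq x c c' s : c' <> c -> upd x c s c' = x c'.
Proof. intro H; unfold upd; destruct (coord_eq_dec c' c); congruence. Qed.
Lemma upd_same x c : upd x c (x c) = x.
Proof. apply functional_extensionality; intro c'; unfold upd; destruct (coord_eq_dec c' c); subst; auto. Qed.
Lemma upd_upd x c u v : upd (upd x c u) c v = upd x c v.
Proof. apply functional_extensionality; intro c'; unfold upd; destruct (coord_eq_dec c' c); auto. Qed.
Lemma upd_comm x a b u v : a <> b -> upd (upd x a u) b v = upd (upd x b v) a u.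
Proof. intro H; apply functional_extensionality; intro c'; unfold upd;
  destruct (coord_eq_dec c' a); destruct (coord_eq_dec c' b); subst; congruence. Qed.

Lemma dep_pd S G c : In c S -> depends_only S G -> depends_only S (pd c G).
Proof.
  intros Hc HG x y Hxy. unfold pd. rewrite (Hxy c Hc). f_equal.
  apply functional_extensionality; intro s. apply HG. intros c' Hc'. unfold upd.
  destruct (coord_eq_dec c' c); auto.
Qed.
Lemma dep_iter S F cs : (forall c, In c cs -> In c S) -> depends_only S F -> depends_only S (iter_pd cs F).
Proof.
  induction cs as [|c cs IH]; intros Hcs HF; simpl; auto.
  apply dep_pd. apply Hcs; simpl; auto. apply IH; auto. intros; apply Hcs; simpl; auto.
Qed.

Definition linej (x u : Jet) (s : R) : Jet := fun c => x c + s * u c.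
Definition uL (L : list coord) (u : Jet) : Jet := fun c => if in_dec coord_eq_dec c L then u c else 0.
Definition sumS (L : list coord) (g : coord -> R) := fold_right (fun c r => g c + r) 0 L.

Lemma sumS_abs_ge L u c : In c L -> Rabs (u c) <= sumS L (fun c => Rabs (u c)).
Proof.
  induction L as [|a L IH]; simpl; intros H; [contradiction|].
  assert (0 <= sumS L (fun c => Rabs (u c))).
  { clear. induction L; simpl. lra. pose proof (Rabs_pos (u a)); lra. }
  destruct H as [H|H]; [subst; lra|]. specialize (IH H). pose proof (Rabs_pos (u a)); lra.
Qed.

Lemma minmax_bound a b t : Rmin a b <= t <= Rmax a b -> Rabs (t - a) <= Rabs (b - a).
Proof.
  unfold Rmin, Rmax; destruct (Rle_dec a b); intros [H1 H2];
  unfold Rabs; destruct (Rcase_abs (t - a)); destruct (Rcase_abs (b - a)); lra.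
Qed.

Section Chain.
Variables (S : list coord) (G : JFun).
Hypothesis Hdep : depends_only S G.
Hypothesis Hex : forall c y, In c S -> ex_derive (fun s => G (upd y c s)) (y c).
Hypothesis Hcont : forall c, In c S -> cont_on S (pd c G).

Lemma mvt_step (Y : Jet) c a b : In c S -> Y c = a ->
  exists th, Rabs (th - a) <= Rabs (b - a) /\
    G (upd Y c b) - G Y = pd c G (upd Y c th) * (b - a).
Proof.
  intros Hc HY.
  set (g := fun t => G (upd Y c t)).
  assert (Hd : forall t, is_derive g t (pd c G (upd Y c t))).
  { intro t. unfold pd.
    assert (E : (fun s => G (upd (upd Y c t) c s)) = g).
    { apply functional_extensionality; intro s. unfold g. rewrite upd_upd. reflexivity. }
    rewrite E, upd_eq. apply Derive_correct. pose proof (Hex c (upd Y c t) Hc) as E'.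
    rewrite upd_eq in E'. eapply ex_derive_ext; [|exact E'].
    intro s; simpl. unfold g. rewrite upd_upd. reflexivity. }
  destruct (MVT_gen g a b (fun t => pd c G (upd Y c t))) as [th [Hth Heq]].
  { intros; apply Hd. }
  { intros t _. apply derivable_continuous_pt. exists (pd c G (upd Y c t)).
    apply is_derive_Reals. apply Hd. }
  exists th. split. apply minmax_bound; auto.
  unfold g in Heq. rewrite <- HY in Heq at 1. rewrite upd_same in Heq. exact Heq.
Qed.

Lemma chain_L (x u : Jet) : forall L, NoDup L -> (forall c, In c L -> In c S) ->
  derivable_pt_lim (fun s => G (linej x (uL L u) s)) 0 (sumS L (fun c => u c * pd c G x)).
Proof.
  induction L as [|c L IH]; intros HN HL.
  - simpl. replace (fun s => G (linej x (uL nil u) s)) with (fct_cte (G x)).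
    apply derivable_pt_lim_const.
    apply functional_extensionality; intro s. unfold fct_cte. f_equal.
    apply functional_extensionality; intro c. unfold linej, uL. simpl. ring.
  - inversion HN as [|? ? Hnin HN']; subst.
    assert (HcS : In c S) by (apply HL; simpl; auto).
    specialize (IH HN' (fun c' H => HL c' (or_intror H))).
    set (y := fun s => linej x (uL L u) s).
    assert (Hyc : forall s, y s c = x c).
    { intro s. unfold y, linej, uL. destruct (in_dec coord_eq_dec c L); [contradiction|]. ring. }
    assert (Hlin : forall s, linej x (uL (c :: L) u) s = upd (y s) c (x c + s * u c)).
    { intro s; apply functional_extensionality; intro c'. unfold upd, y, linej, uL.
      destruct (coord_eq_dec c' c).
      - subst. destruct (in_dec coord_eq_dec c (c :: L)) as [_|n]; [auto|]. exfalso; apply n; simpl; auto.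
      - destruct (in_dec coord_eq_dec c' (c :: L)) as [i|n']; destruct (in_dec coord_eq_dec c' L) as [i'|n''];
        auto. destruct i; [congruence|contradiction]. exfalso; apply n'; simpl; auto. }
    assert (HM : forall s, exists th, Rabs (th - x c) <= Rabs (s * u c) /\
       G (linej x (uL (c :: L) u) s) - G (y s) = pd c G (upd (y s) c th) * (s * u c)).
    { intro s. rewrite Hlin. destruct (mvt_step (y s) c (x c) (x c + s * u c) HcS (Hyc s)) as [th [H1 H2]].
      exists th. replace (x c + s * u c - x c) with (s * u c) in * by ring. auto. }
    set (M := sumS S (fun c => Rabs (u c)) + 1).
    assert (HMpos : 0 < M).
    { unfold M. assert (0 <= sumS S (fun c => Rabs (u c))).
      { clear. induction S; simpl. lra. pose proof (Rabs_pos (u a)); lra. } lra. }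
    intros eps Heps.
    destruct (IH (eps / 2)) as [d1 Hd1]; [lra|].
    set (P := pd c G x).
    destruct (Hcont c HcS x (eps / (2 * (Rabs (u c) + 1)))) as [d2 [Hd2 Hc2]].
    { apply Rdiv_lt_0_compat; [lra|]. pose proof (Rabs_pos (u c)); lra. }
    assert (Hd2M : 0 < d2 / M) by (apply Rdiv_lt_0_compat; lra).
    exists (mkposreal (Rmin d1 (d2 / M)) (Rmin_pos _ _ (cond_pos d1) Hd2M)).
    intros h Hh Hhd. simpl in Hhd.
    assert (Hh1 : Rabs h < d1) by (eapply Rlt_le_trans; [exact Hhd|apply Rmin_l]).
    assert (Hh2 : Rabs h < d2 / M) by (eapply Rlt_le_trans; [exact Hhd|apply Rmin_r]).
    specialize (Hd1 h Hh Hh1).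
    destruct (HM h) as [th [Hth Heq]].
    destruct (HM 0) as [th0 [_ Heq0]].
    replace (pd c G (upd (y 0) c th0) * (0 * u c)) with 0 in Heq0 by ring.
    assert (Hz : forall c', In c' S -> Rabs (upd (y h) c th c' - x c') < d2).
    { intros c' Hc'. 
      assert (Hb : Rabs (upd (y h) c th c' - x c') <= Rabs h * Rabs (u c')).
      { unfold upd. destruct (coord_eq_dec c' c).
        - subst. rewrite <- Rabs_mult. exact Hth.
        - unfold y, linej, uL. destruct (in_dec coord_eq_dec c' L).
          + replace (x c' + h * u c' - x c') with (h * u c') by ring. rewrite Rabs_mult; lra.
          + replace (x c' + h * 0 - x c') with 0 by ring. rewrite Rabs_R0.
            apply Rmult_le_pos; apply Rabs_pos. }
      assert (Hu : Rabs (u c') <= M) by (pose proof (sumS_abs_ge S u c' Hc'); unfold M; lra).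
      apply Rle_lt_trans with (Rabs h * M).
      + eapply Rle_trans; [exact Hb|]. apply Rmult_le_compat_l; [apply Rabs_pos|exact Hu].
      + apply Rmult_lt_reg_r with (/ M). apply Rinv_0_lt_compat; lra.
        rewrite Rmult_assoc, Rinv_r by lra. rewrite Rmult_1_r. exact Hh2. }
    specialize (Hc2 _ Hz).
    simpl sumS.
    set (ps := fun s => G (linej x (uL (c :: L) u) s)) in *.
    set (ph := fun s => G (linej x (uL L u) s)) in *.
    assert (E0 : ps 0 = ph 0) by (unfold ps, ph; fold (y 0); lra).
    assert (E1 : ps (0 + h) - ps 0 = (ph (0 + h) - ph 0) + pd c G (upd (y h) c th) * (h * u c)).
    { rewrite Rplus_0_l. unfold ps, ph. fold (y h). fold (y 0). lra. }
    match goal with |- Rabs ?Z < eps => replace Z with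
      (((ph (0 + h) - ph 0) / h - sumS L (fun c0 => u c0 * pd c0 G x))
            + u c * (pd c G (upd (y h) c th) - P)) end.
    2:{ change (G (linej x (uL (c :: L) u) (0 + h))) with (ps (0+h)). change (G (linej x (uL (c :: L) u) 0)) with (ps 0). rewrite E1. unfold P. field. auto. }
    eapply Rle_lt_trans; [apply Rabs_triang|].
    rewrite Rabs_mult.
    assert (Rabs (u c) * Rabs (pd c G (upd (y h) c th) - P) <= eps / 2).
    { apply Rle_trans with ((Rabs (u c) + 1) * (eps / (2 * (Rabs (u c) + 1)))).
      - pose proof (Rabs_pos (u c)). pose proof (Rabs_pos (pd c G (upd (y h) c th) - P)).
        apply Rmult_le_compat; try lra. unfold P; lra.
      - pose proof (Rabs_pos (u c)). apply Req_le. field. lra. }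
    unfold ph in *. cbv beta in *. lra.
Qed.

Lemma line_chain (x u : Jet) : NoDup S ->
  is_derive (fun s => G (linej x u s)) 0 (sumS S (fun c => u c * pd c G x)).
Proof.
  intros HN. apply is_derive_ext with (f := fun s => G (linej x (uL S u) s)).
  - intro s. apply Hdep. intros c Hc.
    unfold linej, uL. destruct (in_dec coord_eq_dec c S); [auto|contradiction].
  - apply is_derive_Reals. apply chain_L; auto.
Qed.
End Chain.

Lemma cont2d S K y a b : a <> b -> cont_on S K ->
  continuity_2d_pt (fun u v => K (upd (upd y a u) b v)) (y a) (y b).
Proof.
  intros Hab HK eps. destruct (HK y eps (cond_pos eps)) as [d [Hd H]].
  exists (mkposreal d Hd). intros u v Hu Hv. simpl in Hu, Hv.
  rewrite upd_same, upd_same. apply H. intros c _. unfold upd.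
  destruct (coord_eq_dec c b); [subst; auto|].
  destruct (coord_eq_dec c a); [subst; auto|]. rewrite Rminus_diag, Rabs_R0; auto.
Qed.

Lemma upd_X_a y a b u v s : a <> b -> upd (upd (upd y a u) b v) a s = upd (upd y a s) b v.
Proof. intro H. rewrite upd_comm by congruence. rewrite upd_upd. reflexivity. Qed.

Lemma pd_swap S F L a b : smooth_jet S F -> In a S -> In b S -> (forall c, In c L -> In c S) ->
  pd a (pd b (iter_pd L F)) = pd b (pd a (iter_pd L F)).
Proof.
  intros [Hdep Hsm] Ha Hb HL.
  apply functional_extensionality; intro y.
  destruct (coord_eq_dec a b) as [->|Hab]; [reflexivity|].
  set (G := iter_pd L F).
  assert (exG : forall c X, In c S -> ex_derive (fun s => G (upd X c s)) (X c))
    by (intros; apply (proj2 (Hsm L HL)); auto).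
  assert (exGb : forall c X, In c S -> ex_derive (fun s => pd b G (upd X c s)) (X c)).
  { intros. apply (proj2 (Hsm (b :: L) ltac:(intros c' [<-|H']; auto))); auto. }
  assert (exGa : forall c X, In c S -> ex_derive (fun s => pd a G (upd X c s)) (X c)).
  { intros. apply (proj2 (Hsm (a :: L) ltac:(intros c' [<-|H']; auto))); auto. }
  assert (cab : cont_on S (pd a (pd b G))).
  { apply (proj1 (Hsm (a :: b :: L) ltac:(intros c' [<-|[<-|H']]; auto))). }
  assert (cba : cont_on S (pd b (pd a G))).
  { apply (proj1 (Hsm (b :: a :: L) ltac:(intros c' [<-|[<-|H']]; auto))). }
  set (f2 := fun u v => G (upd (upd y a u) b v)).
  assert (Hba : b <> a) by congruence.
  assert (E1 : (fun s => pd b G (upd y a s)) = (fun z => Derive (fun t => f2 z t) (y b))).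
  { apply functional_extensionality; intro z. unfold pd. rewrite upd_neq by auto. reflexivity. }
  assert (E2 : (fun s => pd a G (upd y b s)) = (fun z => Derive (fun t => f2 t z) (y a))).
  { apply functional_extensionality; intro z. unfold pd. rewrite upd_neq by auto.
    f_equal. apply functional_extensionality; intro t. unfold f2. rewrite upd_comm by auto. reflexivity. }
  assert (F1 : forall u v, (fun z => Derive (fun t => f2 z t) v) = (fun z => pd b G (upd (upd (upd y a u) b v) a z))).
  { intros u v. apply functional_extensionality; intro z. rewrite upd_X_a by auto.
    unfold pd. rewrite upd_eq. f_equal. apply functional_extensionality; intro t.
    unfold f2. rewrite upd_upd. reflexivity. }
  assert (F2 : forall u v, (fun z => Derive (fun t => f2 t z) u) = (fun z => pd a G (upd (upd (upd y a u) b v) b z))).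
  { intros u v. apply functional_extensionality; intro z. rewrite upd_upd.
    unfold pd. rewrite upd_neq by auto. rewrite upd_eq. f_equal.
    apply functional_extensionality; intro t. unfold f2. rewrite upd_X_a by auto. reflexivity. }
  change (Derive (fun s => pd b G (upd y a s)) (y a) = Derive (fun s => pd a G (upd y b s)) (y b)).
  rewrite E1, E2.
  apply Schwarz.
  - exists (mkposreal 1 Rlt_0_1). intros u v _ _.
    assert (Xa : upd (upd y a u) b v a = u) by (rewrite upd_neq by auto; apply upd_eq).
    assert (Xb : upd (upd y a u) b v b = v) by apply upd_eq.
    repeat split.
    + pose proof (exG a (upd (upd y a u) b v) Ha) as H. rewrite Xa in H.
      eapply ex_derive_ext; [|exact H]. intro s. simpl. unfold f2. rewrite upd_X_a by auto. reflexivity.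
    + pose proof (exG b (upd (upd y a u) b v) Hb) as H. rewrite Xb in H.
      eapply ex_derive_ext; [|exact H]. intro s. simpl. unfold f2. rewrite upd_upd. reflexivity.
    + rewrite (F1 u v). pose proof (exGb a (upd (upd y a u) b v) Ha) as H. rewrite Xa in H. exact H.
    + rewrite (F2 u v). pose proof (exGa b (upd (upd y a u) b v) Hb) as H. rewrite Xb in H. exact H.
  - replace (fun u v => Derive (fun z => Derive (fun t => f2 z t) v) u)
      with (fun u v => pd a (pd b G) (upd (upd y a u) b v)).
    + apply cont2d with (S := S); auto.
    + apply functional_extensionality; intro u. apply functional_extensionality; intro v.
      rewrite (F1 u v). unfold pd at 1. rewrite upd_neq by auto. rewrite upd_eq. reflexivity.
  - replace (fun u v => Derive (fun z => Derive (fun t => f2 t z) u) v)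
      with (fun u v => pd b (pd a G) (upd (upd y a u) b v)).
    + apply cont2d with (S := S); auto.
    + apply functional_extensionality; intro u. apply functional_extensionality; intro v.
      rewrite (F2 u v). unfold pd at 1. rewrite upd_eq. reflexivity.
Qed.

Lemma idx_in S i : In (CT 0) S -> In (idx S i) S.
Proof.
  intro H0. unfold idx. destruct (Nat.lt_ge_cases i (length S)).
  - apply nth_In; auto.
  - rewrite nth_overflow; auto.
Qed.

Lemma map_idx_in S l : In (CT 0) S -> forall c, In c (map (idx S) l) -> In c S.
Proof. intros H0 c Hc. apply in_map_iff in Hc. destruct Hc as [i [<- _]]. apply idx_in; auto. Qed.

Lemma atom_chain S F l x u : smooth_jet S F -> NoDup S -> In (CT 0) S ->
  is_derive (fun s => iter_pd (map (idx S) l) F (linej x u s)) 0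
    (sumS S (fun c => u c * pd c (iter_pd (map (idx S) l) F) x)).
Proof.
  intros [Hdep Hsm] HN H0.
  apply line_chain; auto.
  - apply dep_iter; auto. apply map_idx_in; auto.
  - intros c y Hc. apply (proj2 (Hsm _ (map_idx_in S l H0))); auto.
  - intros c Hc. apply (proj1 (Hsm (c :: map (idx S) l) ltac:(intros c' [<-|H']; [auto|apply (map_idx_in S l H0); auto]))).
Qed.

Lemma shift_line k x u s : Defs.shift k (linej x u s) = linej (Defs.shift k x) (Defs.shift k u) s.
Proof. apply functional_extensionality; intro c; destruct c; reflexivity. Qed.
Lemma linej0 x u : linej x u 0 = x.
Proof. apply functional_extensionality; intro c; unfold linej; ring. Qed.
Lemma shift_comp k m x : Defs.shift k (Defs.shift m x) = Defs.shift (k + m) x.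
Proof. apply functional_extensionality; intro c; destruct c; simpl; rewrite Z.add_assoc; reflexivity. Qed.

Lemma lin_deriv (a b : R) : derivable_pt_lim (fun s => a + s * b) 0 b.
Proof.
  intros eps Heps. exists (mkposreal 1 Rlt_0_1). intros h Hh _.
  replace ((a + (0 + h) * b - (a + 0 * b)) / h - b) with 0 by (field; auto).
  rewrite Rabs_R0; auto.
Qed.

Lemma comp_deriv (g : R -> R) a b : (forall t, ex_derive g t) ->
  derivable_pt_lim (fun s => g (a + s * b)) 0 (b * Derive g a).
Proof.
  intro Hg. apply is_derive_Reals.
  assert (H1 : is_derive g (a + 0 * b) (Derive g a)).
  { replace (a + 0 * b) with a by ring. apply Derive_correct; auto. }
  assert (H2 : is_derive (fun s => a + s * b) 0 b) by (apply is_derive_Reals; apply lin_deriv).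
  exact (is_derive_comp g (fun s => a + s * b) 0 _ _ H1 H2).
Qed.

Section Sem.
Variables (tau alpha a1 a2 a3 a4 : R) (H : R -> R -> R -> R -> R -> R -> R) (f : R -> R)
  (eta nu : R -> R -> R -> R).

Definition pars := [alpha; a1; a2; a3; a4].
Definition aden (x : Jet) (a : atom) : R :=
  match a with
  | AX c => x c
  | AH l k => iter_pd (map (idx S6) l) (Hj H) (Defs.shift k x)
  | AE l k => iter_pd (map (idx S3) l) (g_at eta 0) (Defs.shift k x)
  | AN l k => iter_pd (map (idx S3) l) (g_at nu 0) (Defs.shift k x)
  | AF n k => Derive_n f n (x (CT k))
  | AP i => nth i pars 0
  end.
Fixpoint den (x : Jet) (e : ex) : R :=
  match e with
  | ECst z => IZR z
  | EAdd a b => den x a + den x b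
  | EMul a b => den x a * den x b
  | EAt a => aden x a
  end.

Lemma den_shift e : forall x m, den (Defs.shift m x) e = den x (shiftE m e).
Proof.
  induction e as [z|a IHa b IHb|a IHa b IHb|a]; intros x m; simpl; try congruence.
  destruct a; simpl; try rewrite shift_comp; try reflexivity.
  destruct c; reflexivity.
Qed.

Hypotheses (HH : smooth6 H) (Hf : smooth1 f) (Heta : smooth3 eta) (Hnu : smooth3 nu).

Lemma NoDup6 : NoDup S6.
Proof. unfold S6. repeat constructor; simpl; intuition discriminate. Qed.
Lemma NoDup3 : NoDup S3.
Proof. unfold S3. repeat constructor; simpl; intuition discriminate. Qed.

Lemma den_line w e x :
  derivable_pt_lim (fun s => den (linej x (fun c => den x (w c)) s) e) 0 (den x (der w e)).
Proof.
  set (U := fun c => den x (w c)).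
  induction e as [z|a IHa b IHb|a IHa b IHb|a].
  - apply derivable_pt_lim_const.
  - apply (derivable_pt_lim_plus _ _ _ _ _ IHa IHb).
  - pose proof (derivable_pt_lim_mult _ _ _ _ _ IHa IHb) as Hm.
    cbv beta in Hm. rewrite linej0 in Hm. exact Hm.
  - destruct a as [c|l k|l k|l k|n k|i].
    + apply (lin_deriv (x c) (U c)).
    + apply is_derive_Reals.
      apply is_derive_ext with (f := fun s => iter_pd (map (idx S6) l) (Hj H) (linej (Defs.shift k x) (Defs.shift k U) s)).
      { intro s. simpl. rewrite shift_line. reflexivity. }
      replace (den x (der w (EAt (AH l k)))) with
        (sumS S6 (fun c => Defs.shift k U c * pd c (iter_pd (map (idx S6) l) (Hj H)) (Defs.shift k x))).
      apply atom_chain; auto. apply NoDup6. simpl; auto.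
      reflexivity.
    + apply is_derive_Reals.
      apply is_derive_ext with (f := fun s => iter_pd (map (idx S3) l) (g_at eta 0) (linej (Defs.shift k x) (Defs.shift k U) s)).
      { intro s. simpl. rewrite shift_line. reflexivity. }
      replace (den x (der w (EAt (AE l k)))) with
        (sumS S3 (fun c => Defs.shift k U c * pd c (iter_pd (map (idx S3) l) (g_at eta 0)) (Defs.shift k x))).
      apply atom_chain; auto. apply NoDup3. simpl; auto.
      reflexivity.
    + apply is_derive_Reals.
      apply is_derive_ext with (f := fun s => iter_pd (map (idx S3) l) (g_at nu 0) (linej (Defs.shift k x) (Defs.shift k U) s)).
      { intro s. simpl. rewrite shift_line. reflexivity. }
      replace (den x (der w (EAt (AN l k)))) with
        (sumS S3 (fun c => Defs.shift k U c * pd c (iter_pd (map (idx S3) l) (g_at nu 0)) (Defs.shift k x))).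
      apply atom_chain; auto. apply NoDup3. simpl; auto.
      reflexivity.
    + apply (comp_deriv (Derive_n f n) (x (CT k)) (U (CT k))). intro t. apply (Hf n t).
    + apply derivable_pt_lim_const.
Qed.

Lemma dirder_den w e : dirder (fun y c => den y (w c)) (fun y => den y e) = fun y => den y (der w e).
Proof.
  apply functional_extensionality; intro y. unfold dirder.
  apply is_derive_unique. apply is_derive_Reals. exact (den_line w e y).
Qed.

Lemma Dvf_den : Dvf = fun y c => den y (Dw c).
Proof.
  apply functional_extensionality; intro y. apply functional_extensionality; intro c.
  destruct c; reflexivity.
Qed.

Lemma Dt_den e : Dt (fun y => den y e) = fun y => den y (DtE e).
Proof. unfold Dt, DtE. rewrite Dvf_den. apply dirder_den. Qed.

Lemma pd_den c e : pd c (fun y => den y e) = fun y => den y (pdE c e).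
Proof.
  apply functional_extensionality; intro y. unfold pd.
  set (U := fun c' => den y (deltaE c c')).
  assert (E : (fun s => den (upd y c s) e) = fun s => (fun t => den (linej y U t) e) (s - y c)).
  { apply functional_extensionality; intro s. f_equal.
    apply functional_extensionality; intro c'. unfold upd, linej, U, deltaE.
    destruct (coord_eq_dec c' c); [subst|]; simpl; ring. }
  rewrite E. apply is_derive_unique. apply is_derive_Reals.
  replace (den y (pdE c e)) with (den y (pdE c e) * 1) by ring.
  apply (derivable_pt_lim_comp (fun s => s - y c) (fun t => den (linej y U t) e)).
  - apply is_derive_Reals. auto_derive; auto.
  - replace (y c - y c) with 0 by ring. apply (den_line (deltaE c) e y).
Qed.

Lemma Sp_den e : Sp (fun y => den y e) = fun y => den y (shiftE 1 e).
Proof. apply functional_extensionality; intro y. unfold Sp. apply den_shift. Qed.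

Definition xiF (t : R) : R := alpha * t + f t.

Lemma xi_at_den k : xi_at xiF k = fun y => den y (xiE k).
Proof. apply functional_extensionality; intro y. reflexivity. Qed.

Lemma prol_den (isq : bool) (k : Z) (n : nat) : prol xiF (if isq then eta else nu) isq k n = fun y => den y (prolE isq k n).
Proof.
  induction n as [|n IH].
  - destruct isq; apply functional_extensionality; intro y; reflexivity.
  - change (prol xiF (if isq then eta else nu) isq k (S n)) with
      (fun x => Dt (prol xiF (if isq then eta else nu) isq k n) x
                - x (if isq then CQ k (S n) else CP k (S n)) * Dt (xi_at xiF k) x).
    rewrite IH, xi_at_den, !Dt_den.
    apply functional_extensionality; intro y. cbn [prolE den aden negE]. unfold DtE. ring.
Qed.

Lemma Xvf_den : Xvf xiF eta nu = fun y c => den y (wX c).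
Proof.
  apply functional_extensionality; intro y. apply functional_extensionality; intro c.
  destruct c as [k|k n|k n].
  - reflexivity.
  - pose proof (prol_den true k n) as P.
    change (prol xiF eta true k n = fun y => den y (prolE true k n)) in P.
    change (prol xiF eta true k n y = den y (prolE true k n)). rewrite P. reflexivity.
  - pose proof (prol_den false k n) as P.
    change (prol xiF nu false k n = fun y => den y (prolE false k n)) in P.
    change (prol xiF nu false k n y = den y (prolE false k n)). rewrite P. reflexivity.
Qed.

Lemma X_den e : Xop xiF eta nu (fun y => den y e) = fun y => den y (XE e).
Proof. unfold Xop, XE. rewrite Xvf_den. apply dirder_den. Qed.

Lemma var_p_den e : var_p (fun y => den y e) = fun y => den y (var_pE e).
Proof.
  unfold var_p. rewrite !pd_den, !Dt_den.
  replace (fun y => den y (pdE (CP (-1) 0) e) - den y (DtE (pdE (CP (-1) 1) e)))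
    with (fun y => den y (EAdd (pdE (CP (-1) 0) e) (negE (DtE (pdE (CP (-1) 1) e))))).
  2:{ apply functional_extensionality; intro y. cbn [den negE]. ring. }
  rewrite Sp_den. apply functional_extensionality; intro y. unfold var_pE. cbn [den negE]. ring.
Qed.

Lemma var_q_den e : var_q (fun y => den y e) = fun y => den y (var_qE e).
Proof.
  unfold var_q. rewrite !pd_den, !Dt_den.
  replace (fun y => den y (pdE (CQ (-1) 0) e) - den y (DtE (pdE (CQ (-1) 1) e)))
    with (fun y => den y (EAdd (pdE (CQ (-1) 0) e) (negE (DtE (pdE (CQ (-1) 1) e))))).
  2:{ apply functional_extensionality; intro y. cbn [den negE]. ring. }
  rewrite Sp_den. apply functional_extensionality; intro y. unfold var_qE. cbn [den negE]. ring.
Qed.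

Lemma var_t_den e : var_t (fun y => den y e) = fun y => den y (var_tE e).
Proof.
  unfold var_t. rewrite !pd_den.
  change (fun y => y (CQ 0 1) * den y (pdE (CQ 0 1) e) + y (CP 0 1) * den y (pdE (CP 0 1) e))
    with (fun y => den y (EAdd (EMul (AXE (CQ 0 1)) (pdE (CQ 0 1) e)) (EMul (AXE (CP 0 1)) (pdE (CP 0 1) e)))).
  change (fun z => z (CQ (-1) 1) * den z (pdE (CQ (-1) 1) e) + z (CP (-1) 1) * den z (pdE (CP (-1) 1) e))
    with (fun z => den z (EAdd (EMul (AXE (CQ (-1) 1)) (pdE (CQ (-1) 1) e)) (EMul (AXE (CP (-1) 1)) (pdE (CP (-1) 1) e)))).
  rewrite !Dt_den.
  change (fun y => den y (pdE (CT (-1)) e) + den y (DtE (EAdd (EMul (AXE (CQ (-1) 1)) (pdE (CQ (-1) 1) e)) (EMul (AXE (CP (-1) 1)) (pdE (CP (-1) 1) e)))))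
    with (fun y => den y (EAdd (pdE (CT (-1)) e) (DtE (EAdd (EMul (AXE (CQ (-1) 1)) (pdE (CQ (-1) 1) e)) (EMul (AXE (CP (-1) 1)) (pdE (CP (-1) 1) e)))))).
  rewrite Sp_den. apply functional_extensionality; intro y. unfold var_tE. cbn [den negE]. ring.
Qed.

Definition mden x (m : list atom) := fold_right (fun a r => aden x a * r) 1 m.
Definition pden x (p : list (Z * list atom)) := fold_right (fun t r => IZR (fst t) * mden x (snd t) + r) 0 p.

Lemma mden_minsert x a m : mden x (minsert a m) = aden x a * mden x m.
Proof. induction m as [|b m IH]; simpl; [ring|]. destruct (acmp a b); simpl; try rewrite IH; ring. Qed.
Lemma mden_mmul x m1 m2 : mden x (mmul m1 m2) = mden x m1 * mden x m2.
Proof. induction m1 as [|a m1 IH]; simpl; [ring|]. unfold mmul in *. simpl. rewrite mden_minsert, IH. simpl. ring. Qed.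
Lemma pden_pins x t p : pden x (pins t p) = IZR (fst t) * mden x (snd t) + pden x p.
Proof.
  induction p as [|u p IH]; simpl; [ring|].
  destruct (mcmp (snd t) (snd u)); simpl; try ring.
  - destruct (mono_eq_dec (snd t) (snd u)) as [E|E]; simpl; [|ring].
    destruct (Z.eqb_spec (fst t + fst u) 0) as [Z0|Z0]; simpl; rewrite E.
    + assert (IZR (fst t) + IZR (fst u) = 0) by (rewrite <- plus_IZR, Z0; reflexivity).
      replace (IZR (fst t)) with (- IZR (fst u)) by lra. ring.
    + rewrite plus_IZR; ring.
  - rewrite IH; ring.
Qed.
Lemma pden_pinsert x t p : pden x (pinsert t p) = IZR (fst t) * mden x (snd t) + pden x p.
Proof.
  unfold pinsert. destruct (Z.eqb_spec (fst t) 0) as [E|E].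
  - rewrite E; ring.
  - apply pden_pins.
Qed.
Lemma pden_padd x p q : pden x (padd p q) = pden x p + pden x q.
Proof. induction p as [|t p IH]; simpl; [ring|]. rewrite pden_pinsert, IH; ring. Qed.
Lemma pden_pscale x t q : pden x (pscale t q) = IZR (fst t) * mden x (snd t) * pden x q.
Proof. induction q as [|u q IH]; simpl; [ring|]. rewrite mult_IZR, mden_mmul, IH; ring. Qed.
Lemma pden_pmul x p q : pden x (pmul p q) = pden x p * pden x q.
Proof. induction p as [|t p IH]; simpl; [ring|]. rewrite pden_padd, pden_pscale, IH; ring. Qed.
Lemma pden_norm fl x (Hok : forall a, aden x (canon fl a) = aden x a) e : pden x (norm fl e) = den x e.
Proof.
  induction e as [z|a IHa b IHb|a IHa b IHb|a]; simpl.
  - destruct (Z.eqb_spec z 0); simpl; [subst; ring|ring].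
  - rewrite pden_padd; congruence.
  - rewrite pden_pmul; congruence.
  - rewrite Hok; ring.
Qed.

Lemma final_eq fl x L R : (forall a, aden x (canon fl a) = aden x a) ->
  norm fl (EAdd L (negE R)) = nil -> den x L = den x R.
Proof.
  intros Hok E. pose proof (pden_norm fl x Hok (EAdd L (negE R))) as P.
  rewrite E in P. simpl in P. lra.
Qed.

Lemma nins_iter S F a m : smooth_jet S F -> In (CT 0) S ->
  iter_pd (map (idx S) (nins a m)) F = iter_pd (map (idx S) (a :: m)) F.
Proof.
  intros HF H0. induction m as [|b m IH]; simpl; auto.
  destruct (Nat.leb a b); simpl; auto. rewrite IH. simpl.
  apply pd_swap with (S := S); auto; try apply idx_in; auto. apply map_idx_in; auto.
Qed.
Lemma isort_iter S F l : smooth_jet S F -> In (CT 0) S ->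
  iter_pd (map (idx S) (isort l)) F = iter_pd (map (idx S) l) F.
Proof.
  intros HF H0. induction l as [|a l IH]; simpl; auto.
  rewrite nins_iter; auto. simpl. rewrite IH. reflexivity.
Qed.

Hypothesis Hper : forall t, f (t + tau) = f t.

Lemma per_n n : forall t, Derive_n f n (t + tau) = Derive_n f n t.
Proof.
  induction n as [|n IH]; intro t; simpl; [apply Hper|].
  replace (Derive (Derive_n f n) t) with (Derive (fun u => Derive_n f n (u + tau)) t).
  2:{ f_equal. apply functional_extensionality; intro u. apply IH. }
  symmetry. apply is_derive_unique. apply is_derive_Reals.
  replace (Derive (Derive_n f n) (t + tau)) with (Derive (Derive_n f n) (t + tau) * 1) by ring.
  apply (derivable_pt_lim_comp (fun u => u + tau) (Derive_n f n)).
  - apply is_derive_Reals. auto_derive; auto.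
  - apply is_derive_Reals. apply Derive_correct. apply Hf.
Qed.

Lemma per_nat n m t : Derive_n f n (t + INR m * tau) = Derive_n f n t.
Proof.
  induction m as [|m IH].
  - simpl. rewrite Rmult_0_l, Rplus_0_r. reflexivity.
  - rewrite S_INR. replace (t + (INR m + 1) * tau) with ((t + INR m * tau) + tau) by ring.
    rewrite per_n. exact IH.
Qed.

Lemma per_Z n k t : Derive_n f n (t + IZR k * tau) = Derive_n f n t.
Proof.
  destruct k as [|p|p].
  - simpl. rewrite Rmult_0_l, Rplus_0_r. reflexivity.
  - change (IZR (Z.pos p)) with (IPR p). rewrite <- INR_IPR. apply per_nat.
  - change (IZR (Z.neg p)) with (- IPR p). rewrite <- INR_IPR.
    rewrite <- (per_nat n (Pos.to_nat p) (t + - INR (Pos.to_nat p) * tau)).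
    f_equal. ring.
Qed.

Lemma canon_ok x : delay tau x -> forall a, aden x (canon true a) = aden x a.
Proof.
  intros Hd a. destruct a as [c|l k|l k|l k|n k|i]; simpl; try reflexivity.
  - rewrite isort_iter; auto. simpl; auto.
  - rewrite isort_iter; auto. simpl; auto.
  - rewrite isort_iter; auto. simpl; auto.
  - rewrite (Hd k). rewrite per_Z. reflexivity.
Qed.

End Sem.

Theorem lemma3 (tau a1 a2 a3 a4 alpha : R)
  (H : R -> R -> R -> R -> R -> R -> R) (f : R -> R) (eta nu : R -> R -> R -> R)
  (Htau : 0 < tau) (HH : smooth6 H) (Hf : smooth1 f)
  (Hper : forall t, f (t + tau) = f t)
  (Heta : smooth3 eta) (Hnu : smooth3 nu) :
  let xi := fun t => alpha * t + f t in
  let Ht := Htilde a1 a2 a3 a4 H in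
  let Om := Omega xi eta nu Ht in
  let xidot := Dt (xi_at xi 0) in
  forall x : Jet, delay tau x ->
    var_p Om x = Xop xi eta nu (var_p Ht) x
                 + pd (CP 0 0) (g_at eta 0) x * var_q Ht x
                 + (pd (CP 0 0) (g_at nu 0) x + xidot x) * var_p Ht x
 /\ var_q Om x = Xop xi eta nu (var_q Ht) x
                 + (pd (CQ 0 0) (g_at eta 0) x + xidot x) * var_q Ht x
                 + pd (CQ 0 0) (g_at nu 0) x * var_p Ht x
 /\ var_t Om x = Xop xi eta nu (var_t Ht) x
                 + 2 * xidot x * var_t Ht x
                 + pd (CT 0) (g_at eta 0) x * var_q Ht x
                 + pd (CT 0) (g_at nu 0) x * var_p Ht x.
Proof.
  intros xi Ht Om xidot x Hdel.
  pose proof (Dt_den alpha a1 a2 a3 a4 H f eta nu HH Hf Heta Hnu) as DtD.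
  pose proof (X_den alpha a1 a2 a3 a4 H f eta nu HH Hf Heta Hnu) as XD.
  pose proof (pd_den alpha a1 a2 a3 a4 H f eta nu HH Hf Heta Hnu) as pdD.
  pose proof (var_p_den alpha a1 a2 a3 a4 H f eta nu HH Hf Heta Hnu) as vpD.
  pose proof (var_q_den alpha a1 a2 a3 a4 H f eta nu HH Hf Heta Hnu) as vqD.
  pose proof (var_t_den alpha a1 a2 a3 a4 H f eta nu HH Hf Heta Hnu) as vtD.
  pose proof (xi_at_den alpha a1 a2 a3 a4 H f eta nu) as xiD.
  pose proof (canon_ok tau alpha a1 a2 a3 a4 H f eta nu HH Hf Heta Hnu Hper x Hdel) as Hok.
  pose proof (final_eq alpha a1 a2 a3 a4 H f eta nu true x) as FE.
  assert (Exi : xi = xiF alpha f) by reflexivity.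
  assert (EHt : Ht = fun y => den alpha a1 a2 a3 a4 H f eta nu y eHt).
  { apply functional_extensionality; intro y. unfold Ht, Htilde.
    change (Hj H y) with (den alpha a1 a2 a3 a4 H f eta nu y (EAt (AH nil 0))).
    cbn [den aden eHt negE AXE nth pars]. ring. }
  assert (Exd : xidot = fun y => den alpha a1 a2 a3 a4 H f eta nu y exidot).
  { unfold xidot. rewrite Exi, xiD, DtD. reflexivity. }
  assert (EOm : Om = fun y => den alpha a1 a2 a3 a4 H f eta nu y eOm).
  { unfold Om, Omega. rewrite EHt, Exi, XD.
    change (Dt (xi_at (xiF alpha f) 0)) with xidot. rewrite Exd. reflexivity. }
  assert (Ee : g_at eta 0 = fun y => den alpha a1 a2 a3 a4 H f eta nu y eE0) by reflexivity.
  assert (En : g_at nu 0 = fun y => den alpha a1 a2 a3 a4 H f eta nu y eN0) by reflexivity.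
  rewrite Exd, EOm, EHt, Ee, En, Exi.
  rewrite !vpD, !vqD, !vtD, !pdD, !XD.
  split; [|split].
  - change (den alpha a1 a2 a3 a4 H f eta nu x eL1 = den alpha a1 a2 a3 a4 H f eta nu x eR1).
    apply FE; [exact Hok|vm_compute; reflexivity].
  - change (den alpha a1 a2 a3 a4 H f eta nu x eL2 = den alpha a1 a2 a3 a4 H f eta nu x eR2).
    apply FE; [exact Hok|vm_compute; reflexivity].
  - change (den alpha a1 a2 a3 a4 H f eta nu x eL3 = den alpha a1 a2 a3 a4 H f eta nu x eR3).
    apply FE; [exact Hok|vm_compute; reflexivity].
Qed.
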